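(* Let $f_0,f_1,f_2\in\mathbb{C}[[z]]$ be in general position and let $R_j^{[n]}$ be as in the context. For $n\in\mathbb{N}$ put $k_2:=\deg R_1^{[n]}$, $k_1:=\deg R_2^{[n]}$, $k_0:=\deg R_3^{[n]}$ and $\mathbf{k}^{[n]}:=(k_0,k_1,k_2)$. Then $|\mathbf{k}^{[n]}|=k_0+k_1+k_2=n-1$, $$R_1^{[n]}f_2+R_2^{[n]}f_1+R_3^{[n]}f_0=O(z^{n+1}),$$ and $(R_3^{[n]},R_2^{[n]},R_1^{[n]})$ is a tuple of Hermite–Padé polynomials of type I for $[f_0,f_1,f_2]$ and the multiindex $\mathbf{k}^{[n]}$, with order of tangency $|\mathbf{k}^{[n]}|+2=n+1$.
   Context: For $g\in\mathbb{C}[[z]]$, $g=O(z^N)$ means the coefficients of $z^0,\dots,z^{N-1}$ vanish. For $\mathbf{k}=(k_0,\dots,k_m)\in\mathbb{Z}_+^{m+1}$, $|\mathbf{k}|=\sum k_j$, a tuple of polynomials $(Q_0,\dots,Q_m)$, not all zero, with $\deg Q_j\le k_j$ and $\sum_j Q_jf_j=O(z^{|\mathbf{k}|+m})$ is a tuple of Hermite–Padé polynomials of type I for $[f_0,\dots,f_m]$ and $\mathbf{k}$ ($|\mathbf{k}|+m$ is the order of tangency). Construction ($m=2$): put $f_j^{[0]}:=f_j$. For $n\ge0$: $c_j^{[n]}$ is the constant term of $f_j^{[n]}$, $a^{[n]}:=-c_2^{[n]}/c_1^{[n]}$, $b^{[n]}:=-c_1^{[n]}/c_0^{[n]}$, $f_2^{[n+1]}:=f_0^{[n]}$,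 $f_1^{[n+1]}:=z^{-1}(f_2^{[n]}+a^{[n]}f_1^{[n]})$, $f_0^{[n+1]}:=z^{-1}(f_1^{[n]}+b^{[n]}f_0^{[n]})$. Let $M^{[n]}:=\begin{pmatrix}0&0&z\\1&a^{[n]}&0\\0&1&b^{[n]}\end{pmatrix}$ and $A^{[n]}:=M^{[n]}\cdots M^{[0]}$, whose third row is $(R_1^{[n]},R_2^{[n]},R_3^{[n]})$. General position: all $c_j^{[n]}\neq0$, and for every $n\ge0$ and every entry of $A^{[n+1]}=M^{[n+1]}A^{[n]}$ (a sum of at most two products of an entry of $M^{[n+1]}$ and an entry of $A^{[n]}$), the degree of the entry equals the maximum of the degrees of these products (zero polynomial has degree $-\infty$). *)

(* Defs.v *)
(* Formal power series over C are coefficient sequences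
   nat -> C, with C := R[i] for a real type R (the complex numbers). *)
From HB Require Import structures.
From mathcomp Require Import all_boot all_order all_algebra.
From mathcomp Require Import complex.
From mathcomp Require Import reals.
Set Implicit Arguments. Unset Strict Implicit. Unset Printing Implicit Defensive.
Import Order.TTheory GRing.Theory Num.Theory.
Local Open Scope ring_scope.

Section Defs.
Variable C : fieldType.

Definition series := nat -> C.

Definition sadd (f g : series) : series := fun k => f k + g k.
Definition sscale (a : C) (f : series) : series := fun k => a * f k.
(* z^{-1} g : only applied to series with zero constant term *)
Definition sdivz (f : series) : series := fun k => f k.+1.
Definition pmul (p : {poly C}) (f : series) : series :=
  fun k => \sum_(i < k.+1) p`_i * f (k - i)%N.

Definition bigOz (N : nat) (g : series) : Prop := forall i, (i < N)%N -> g i = 0.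

Definition HermitePadeI (m : nat) (f : 'I_m.+1 -> series)
  (k : 'I_m.+1 -> nat) (Q : 'I_m.+1 -> {poly C}) : Prop :=
  (exists j, Q j != 0) /\
  (forall j, (size (Q j) <= (k j).+1)%N) /\
  bigOz ((\sum_(j < m.+1) k j) + m)%N
        (fun t => \sum_(j < m.+1) pmul (Q j) (f j) t).

(* The construction (m = 2). The state at step n is (f_0^[n], f_1^[n], f_2^[n]). *)
Definition aof (s : series * series * series) : C :=
  let: (f0, f1, f2) := s in - f2 0%N / f1 0%N.
Definition bof (s : series * series * series) : C :=
  let: (f0, f1, f2) := s in - f1 0%N / f0 0%N.

Definition step (s : series * series * series) : series * series * series :=
  let: (f0, f1, f2) := s in
  (sdivz (sadd f1 (sscale (bof s) f0)),
   sdivz (sadd f2 (sscale (aof s) f1)),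
   f0).

Definition fstate (f0 f1 f2 : series) (n : nat) := iter n step (f0, f1, f2).

Definition cst (f0 f1 f2 : series) (n : nat) (j : 'I_3) : C :=
  let: (g0, g1, g2) := fstate f0 f1 f2 n in
  [ffun i : 'I_3 => if val i == 0%N then g0 0%N
                    else if val i == 1%N then g1 0%N else g2 0%N] j.

Definition aseq f0 f1 f2 n := aof (fstate f0 f1 f2 n).
Definition bseq f0 f1 f2 n := bof (fstate f0 f1 f2 n).

Definition Mmat (f0 f1 f2 : series) (n : nat) : 'M[{poly C}]_3 :=
  \matrix_(i < 3, j < 3)
    match val i, val j with
    | 0, 2 => 'X
    | 1, 0 => 1
    | 1, 1 => (aseq f0 f1 f2 n)%:P
    | 2, 1 => 1
    | 2, 2 => (bseq f0 f1 f2 n)%:P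
    | _, _ => 0
    end.

Fixpoint Amat (f0 f1 f2 : series) (n : nat) : 'M[{poly C}]_3 :=
  match n with
  | 0 => Mmat f0 f1 f2 0
  | n'.+1 => Mmat f0 f1 f2 n'.+1 *m Amat f0 f1 f2 n'
  end.

(* General position.  Degrees are compared through size = deg + 1
   (size 0 = 0 encodes deg 0 = -oo), which preserves max. *)
Definition general_position (f0 f1 f2 : series) : Prop :=
  (forall n (j : 'I_3), cst f0 f1 f2 n j != 0) /\
  (forall n (i j : 'I_3),
     size (Amat f0 f1 f2 n.+1 i j) =
     (\max_(l < 3) size (Mmat f0 f1 f2 n.+1 i l * Amat f0 f1 f2 n l j)%R)%N).

End Defs.

(* Main.v *)
Require Import Defs.
From HB Require Import structures.
From mathcomp Require Import all_boot all_order all_algebra.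
From mathcomp Require Import complex.
From mathcomp Require Import reals.
From mathcomp Require Import zify ring lra.
Import Order.TTheory GRing.Theory Num.Theory.
Local Open Scope ring_scope.

Lemma pmulD (C : fieldType) (p q : {poly C}) f t :
  pmul (p + q) f t = pmul p f t + pmul q f t.
Proof. by rewrite /pmul -big_split /=; apply: eq_bigr => i _; rewrite coefD mulrDl. Qed.

Lemma pmul0 (C : fieldType) f t : pmul (0 : {poly C}) f t = 0.
Proof. by rewrite /pmul big1 // => i _; rewrite coef0 mul0r. Qed.

Lemma pmul1 (C : fieldType) f t : pmul (1 : {poly C}) f t = f t.
Proof.
rewrite /pmul big_ord_recl coef1 /= mul1r subn0 big1 ?addr0 // => i _.
by rewrite coef1 /= mul0r.
Qed.

Lemma pmulC (C : fieldType) (c : C) q f t :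
  pmul (c%:P * q) f t = c * pmul q f t.
Proof. by rewrite /pmul mulr_sumr; apply: eq_bigr => i _; rewrite coefCM mulrA. Qed.

Lemma pmulX0 (C : fieldType) (q : {poly C}) f : pmul ('X * q) f 0 = 0.
Proof. by rewrite /pmul big_ord_recl big_ord0 coefXM /= mul0r addr0. Qed.

Lemma pmulXS (C : fieldType) (q : {poly C}) f t :
  pmul ('X * q) f t.+1 = pmul q f t.
Proof.
rewrite /pmul big_ord_recl coefXM /= mul0r add0r.
by apply: eq_bigr => i _; rewrite coefXM /= /bump /= add1n subSS.
Qed.

Lemma sizeXM (C : fieldType) (p : {poly C}) :
  size ('X * p) = if size p == 0%N then 0%N else (size p).+1.
Proof.
rewrite size_poly_eq0; case: eqP => [->|/eqP h]; first by rewrite mulr0 size_poly0.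
by rewrite mulrC size_mulX.
Qed.

Lemma lift1 : lift ord0 ord0 = (1 : 'I_3). Proof. exact: val_inj. Qed.
Lemma lift2 : lift ord0 (lift ord0 ord0) = (2%:R : 'I_3). Proof. exact: val_inj. Qed.
Lemma ord0E : ord0 = (0 : 'I_3). Proof. exact: val_inj. Qed.

Lemma big3 (T : Type) (idx : T) op (F : 'I_3 -> T) :
  \big[op/idx]_(l < 3) F l = op (F 0) (op (F 1) (op (F 2%:R) idx)).
Proof. by rewrite !big_ord_recl big_ord0 lift1 lift2 ord0E. Qed.


Lemma MA0 (C : fieldType) (f0 f1 f2 : series C) (k : nat) (B : 'M[{poly C}]_3) j :
  (Mmat f0 f1 f2 k *m B) 0 j = 'X * B 2%:R j.
Proof. by rewrite mxE big3 !mxE /= !mul0r !add0r addr0. Qed.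
Lemma MA1 (C : fieldType) (f0 f1 f2 : series C) (k : nat) (B : 'M[{poly C}]_3) j :
  (Mmat f0 f1 f2 k *m B) 1 j = B 0 j + (aseq f0 f1 f2 k)%:P * B 1 j.
Proof. by rewrite mxE big3 !mxE /= !mul0r mul1r !addr0. Qed.
Lemma MA2 (C : fieldType) (f0 f1 f2 : series C) (k : nat) (B : 'M[{poly C}]_3) j :
  (Mmat f0 f1 f2 k *m B) 2%:R j = B 1 j + (Defs.bseq f0 f1 f2 k)%:P * B 2%:R j.
Proof. by rewrite mxE big3 !mxE /= !mul0r mul1r !add0r addr0. Qed.

Lemma ab_neq0 (C : fieldType) (f0 f1 f2 : series C) k :
  general_position f0 f1 f2 ->
  aseq f0 f1 f2 k != 0 /\ Defs.bseq f0 f1 f2 k != 0.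
Proof.
case=> [hc _]; have h0 := hc k 0; have h1 := hc k 1; have h2 := hc k 2%:R.
move: h0 h1 h2; rewrite /cst /aseq /Defs.bseq /aof /bof.
case: (fstate f0 f1 f2 k) => [[g0 g1] g2]; rewrite !ffunE /= => h0 h1 h2.
split; rewrite mulNr oppr_eq0 mulf_neq0 ?invr_eq0 //.
Qed.

Lemma size_step0 (C : fieldType) (f0 f1 f2 : series C) n j :
  general_position f0 f1 f2 ->
  size (Amat f0 f1 f2 n.+1 0 j) =
  (if size (Amat f0 f1 f2 n 2%:R j) == 0%N then 0
   else (size (Amat f0 f1 f2 n 2%:R j)).+1)%N.
Proof.
move=> gp; rewrite gp.2 big3 !mxE /= !mul0r size_poly0 sizeXM.
by rewrite !max0n maxn0.
Qed.

Lemma size_step1 (C : fieldType) (f0 f1 f2 : series C) n j :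
  general_position f0 f1 f2 ->
  size (Amat f0 f1 f2 n.+1 1 j) =
  maxn (size (Amat f0 f1 f2 n 0 j)) (size (Amat f0 f1 f2 n 1 j)).
Proof.
move=> gp; rewrite gp.2 big3 !mxE /= mul0r size_poly0 mul1r size_Cmul ?max0n ?maxn0 //.
by case: (@ab_neq0 _ _ _ _ n.+1 gp).
Qed.

Lemma size_step2 (C : fieldType) (f0 f1 f2 : series C) n j :
  general_position f0 f1 f2 ->
  size (Amat f0 f1 f2 n.+1 2%:R j) =
  maxn (size (Amat f0 f1 f2 n 1 j)) (size (Amat f0 f1 f2 n 2%:R j)).
Proof.
move=> gp; rewrite gp.2 big3 !mxE /= mul0r size_poly0 mul1r size_Cmul ?max0n ?maxn0 //.
by case: (@ab_neq0 _ _ _ _ n.+1 gp).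
Qed.

Lemma size_closed (C : fieldType) (f0 f1 f2 : series C) n (j : 'I_3) :
  general_position f0 f1 f2 ->
  [/\ size (Amat f0 f1 f2 n.+2 0 j) = ((n + 6 + j) %/ 3)%N,
      size (Amat f0 f1 f2 n.+2 1 j) = ((n + 5 + j) %/ 3)%N &
      size (Amat f0 f1 f2 n.+2 2%:R j) = ((n + 4 + j) %/ 3)%N].
Proof.
move=> gp; elim: n => [|n [IH0 IH1 IH2]].
  have [ha hb] := @ab_neq0 _ _ _ _ 0 gp.
  do 3 rewrite ?size_step0 // ?size_step1 // ?size_step2 //.
  case: j => [[|[|[|j]]] hj] //=; rewrite !mxE /= ?size_polyC ?ha ?hb
    ?size_poly0 ?size_polyX ?size_poly1 ?oner_neq0 ?eqxx //=.
rewrite (@size_step0 _ _ _ _ n.+2 j gp) (@size_step1 _ _ _ _ n.+2 j gp) (@size_step2 _ _ _ _ n.+2 j gp) IH0 IH1 IH2.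
split.
- case: ifP => /eqP h; lia.
- lia.
- lia.
Qed.

Definition szs (C : fieldType) (N : nat) (g : series C) : series C :=
  fun t => if (t < N)%N then 0 else g (t - N)%N.

Definition hc (C : fieldType) (s : series C * series C * series C) (i : nat) :=
  let: (g0, g1, g2) := s in if i == 0%N then g2 else if i == 1%N then g1 else g0.

Definition Hrow (C : fieldType) (f0 f1 f2 : series C) (B : 'M[{poly C}]_3) i t :=
  pmul (B i 0) f2 t + pmul (B i 1) f1 t + pmul (B i 2%:R) f0 t.

Arguments szs {C}.
Arguments hc {C}.
Arguments Hrow {C}.

Lemma Hstep (C : fieldType) (f0 f1 f2 : series C) k B N :
  general_position f0 f1 f2 ->
  (forall (i : 'I_3) t, Hrow f0 f1 f2 B i t = szs N (hc (fstate f0 f1 f2 k) i) t) ->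
  forall (i : 'I_3) t,
    Hrow f0 f1 f2 (Mmat f0 f1 f2 k *m B) i t = szs N.+1 (hc (fstate f0 f1 f2 k.+1) i) t.
Proof.
move=> [gc _] IH i t.
have IH0 := IH 0; have IH1 := IH 1; have IH2 := IH 2%:R.
have c0 := gc k 0; have c1 := gc k 1.
have -> : fstate f0 f1 f2 k.+1 = step (fstate f0 f1 f2 k) by rewrite /fstate iterS.
case: i => [[|[|[|i]]] hi] //.
- have -> : Ordinal hi = 0 by exact: val_inj.
  rewrite /Hrow !MA0; move: IH2; rewrite /Hrow.
  case: (fstate f0 f1 f2 k) => [[g0 g1] g2] /= IH2.
  case: t => [|t]; first by rewrite !pmulX0 !addr0.
  by rewrite !pmulXS IH2 /szs /= ltnS subSS.
- have -> : Ordinal hi = 1 by exact: val_inj.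
  rewrite /Hrow !MA1 !pmulD !pmulC.
  have -> : forall a b c d e f (x : C), a + x * b + (c + x * d) + (e + x * f)
     = (a + c + e) + x * (b + d + f) by move=> *; ring.
  move: IH0 IH1 c0 c1; rewrite /Hrow /aseq /cst.
  case: (fstate f0 f1 f2 k) => [[g0 g1] g2] /= -> ->; rewrite !ffunE /= => c0 c1.
  rewrite /szs /sdivz /sadd /sscale /aof.
  case: (ltngtP t N) => h.
  + by rewrite ltnS ltnW // mulr0 addr0.
  + have h1 : (t < N)%N = false by apply/negbTE; rewrite -leqNgt ltnW.
    have h2 : (t < N.+1)%N = false by apply/negbTE; rewrite -leqNgt.
    rewrite ?h1 h2; congr (g2 _ + _ * g1 _); lia.
  + by rewrite h subnn ?ltnn ltnSn !mulNr divfK // subrr.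
- have -> : Ordinal hi = 2%:R by exact: val_inj.
  rewrite /Hrow !MA2 !pmulD !pmulC.
  have -> : forall a b c d e f (x : C), a + x * b + (c + x * d) + (e + x * f)
     = (a + c + e) + x * (b + d + f) by move=> *; ring.
  move: IH1 IH2 c0 c1; rewrite /Hrow /Defs.bseq /cst.
  case: (fstate f0 f1 f2 k) => [[g0 g1] g2] /= -> ->; rewrite !ffunE /= => c0 c1.
  rewrite /szs /sdivz /sadd /sscale /bof.
  case: (ltngtP t N) => h.
  + by rewrite ltnS ltnW // mulr0 addr0.
  + have h1 : (t < N)%N = false by apply/negbTE; rewrite -leqNgt ltnW.
    have h2 : (t < N.+1)%N = false by apply/negbTE; rewrite -leqNgt.
    rewrite ?h1 h2; congr (g1 _ + _ * g0 _); lia.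
  + by rewrite h subnn ?ltnn ltnSn !mulNr divfK // subrr.
Qed.

Lemma Hbase (C : fieldType) (f0 f1 f2 : series C) (i : 'I_3) t :
  Hrow f0 f1 f2 1%:M i t = szs 0 (hc (fstate f0 f1 f2 0) i) t.
Proof.
rewrite /Hrow /szs /= subn0 !mxE.
case: i => [[|[|[|i]]] hi] //=; rewrite ?pmul0 ?pmul1 /=; try ring.
Qed.

Lemma Hall (C : fieldType) (f0 f1 f2 : series C) n :
  general_position f0 f1 f2 ->
  forall (i : 'I_3) t,
    Hrow f0 f1 f2 (Amat f0 f1 f2 n) i t = szs n.+1 (hc (fstate f0 f1 f2 n.+1) i) t.
Proof.
move=> gp; elim: n => [|n IH].
  rewrite /= -[Mmat f0 f1 f2 0]mulmx1; apply: Hstep => //; exact: Hbase.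
by apply: Hstep.
Qed.

Lemma sizes_row2 (C : fieldType) (f0 f1 f2 : series C) n :
  general_position f0 f1 f2 -> (1 <= n)%N ->
  [/\ (0 < size (Amat f0 f1 f2 n 2%:R 0%R))%N,
      (0 < size (Amat f0 f1 f2 n 2%:R 1%R))%N,
      (0 < size (Amat f0 f1 f2 n 2%:R 2%:R))%N &
      (size (Amat f0 f1 f2 n 2%:R 0%R) + size (Amat f0 f1 f2 n 2%:R 1%R)
        + size (Amat f0 f1 f2 n 2%:R 2%:R) = n.+2)%N].
Proof.
move=> gp; case: n => [//|[|m]] _.
  have [ha hb] := @ab_neq0 _ _ _ _ 0 gp.
  rewrite !size_step2 //= !mxE /= ?size_polyC ?ha ?hb
    ?size_poly0 ?size_polyX ?size_poly1 ?oner_neq0 ?eqxx //=.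
have [_ _ a0] := @size_closed _ _ _ _ m 0 gp.
have [_ _ a1] := @size_closed _ _ _ _ m 1 gp.
have [_ _ a2] := @size_closed _ _ _ _ m 2%:R gp.
rewrite a0 a1 a2 /=; split; lia.
Qed.
Local Open Scope complex_scope.

Theorem corollary1 (R : realType) (f0 f1 f2 : series R[i]) (n : nat) :
  general_position f0 f1 f2 -> (1 <= n)%N ->
  let R1 := Amat f0 f1 f2 n 2%:R 0 in
  let R2 := Amat f0 f1 f2 n 2%:R 1 in
  let R3 := Amat f0 f1 f2 n 2%:R 2%:R in
  let k : 'I_3 -> nat := fun j =>
    if val j == 0%N then (size R3).-1
    else if val j == 1%N then (size R2).-1 else (size R1).-1 in
  [/\ [&& R1 != 0, R2 != 0 & R3 != 0],
      (k 0%R + k 1%R + k 2%:R)%N = (n - 1)%N,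
      bigOz n.+1 (fun t => pmul R1 f2 t + pmul R2 f1 t + pmul R3 f0 t)
    & HermitePadeI (fun j : 'I_3 => if val j == 0%N then f0
                                    else if val j == 1%N then f1 else f2)
                   k
                   (fun j : 'I_3 => if val j == 0%N then R3
                                    else if val j == 1%N then R2 else R1)].
Proof.
move=> gp n1 R1 R2 R3 k.
have [s1 s2 s3 ssum] := @sizes_row2 _ _ _ _ n gp n1.
have ksum : (k 0%R + k 1%R + k 2%:R)%N = (n - 1)%N.
  rewrite /k /R1 /R2 /R3 /=; move: s1 s2 s3 ssum; set x1 := size _; set x2 := size _; set x3 := size _; clearbody x1 x2 x3; lia.
have hO : bigOz n.+1 (fun t => pmul R1 f2 t + pmul R2 f1 t + pmul R3 f0 t).
  move=> t ht; have := @Hall _ _ _ _ n gp 2%:R t; rewrite /Hrow /R1 /R2 /R3 => ->.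
  by rewrite /szs ht.
split => //.
- by rewrite -!size_poly_eq0 -!lt0n s1 s2 s3.
- split; first by exists 0; rewrite /= -size_poly_eq0 -lt0n.
  split; first by case=> [[|[|[|j]]] hj] //=; rewrite leqSpred.
  have -> : ((\sum_(j < 3) k j) + 2 = n.+1)%N.
    by rewrite big3 addn0 addnA ksum; lia.
  move=> t ht; rewrite big3 /= addr0 -(hO t ht); ring.
Qed.
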